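(* Let $\mathfrak{g}$ be a finite-dimensional supersolvable Lie algebra over a field $\mathbb{F}$, and let $M$ be a finite-dimensional irreducible Leibniz $\mathfrak{g}$-bimodule such that $\dim_{\mathbb{F}}M\ne 1$. Then $\mathrm{HL}^n(\mathfrak{g},M)=0$ for every positive integer $n$. Moreover, if $M$ is symmetric, then $\mathrm{HL}^n(\mathfrak{g},M)=0$ for every non-negative integer $n$.
   Context: A Lie algebra $\mathfrak{g}$ is supersolvable if there is a chain of ideals $0=\mathfrak{g}_0\subset\mathfrak{g}_1\subset\cdots\subset\mathfrak{g}_n=\mathfrak{g}$ with $\dim\mathfrak{g}_j/\mathfrak{g}_{j-1}=1$. $\mathfrak{g}$ is regarded as a left Leibniz algebra with $xy=[x,y]$. A Leibniz $\mathfrak{g}$-bimodule is a vector space $M$ with bilinear actions $x\cdot m$, $m\cdot x$ satisfying $(xy)\cdot m=x\cdot(y\cdot m)-y\cdot(x\cdot m)$, $(x\cdot m)\cdot y=x\cdot(m\cdot y)-m\cdot(xy)$, $(m\cdot x)\cdot y=m\cdot(xy)-x\cdot(m\cdot y)$; it is irreducible if nonzero with no sub-bimodules other than $0$ and $M$; symmetric if $m\cdot x=-x\cdot m$. $\mathrm{HL}^n(\mathfrak{g},M)$ is the cohomology of $\mathrm{Hom}(\mathfrak{g}^{\otimes n},M)$ with $(\mathrm{d}^nf)(x_1,\dots,x_{n+1})=\sum_{i=1}^n(-1)^{i+1}x_i\cdot f(\dots,\hat{x}_i,\dots)+(-1)^{n+1}f(x_1,\dots,x_n)\cdot x_{n+1}+\sum_{i<j}(-1)^if(x_1,\dots,\hat{x}_i,\dots,x_ix_j,\dots,x_{n+1})$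 ($x_ix_j$ in the $j$-th position). *)

(* Defs.v *)
From HB Require Import structures.
From mathcomp Require Import all_boot all_order all_algebra.
Set Implicit Arguments. Unset Strict Implicit. Unset Printing Implicit Defensive.
Import Order.TTheory GRing.Theory Num.Theory.
Local Open Scope ring_scope.

Definition is_lie_bracket (F : fieldType) (V : vectType F) (br : V -> V -> V) :=
  [/\ forall x, linear (br x),
      forall y, linear (br ^~ y),
      forall x, br x x = 0
    & forall x y z, br x (br y z) + br y (br z x) + br z (br x y) = 0].

(* ideal of a Lie algebra (left = two-sided, by antisymmetry) *)
Definition lie_ideal (F : fieldType) (V : vectType F) (br : V -> V -> V)
  (I : {vspace V}) := forall x y, y \in I -> br x y \in I.

Definition supersolvable (F : fieldType) (V : vectType F) (br : V -> V -> V) :=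
  exists (n : nat) (G : nat -> {vspace V}),
    [/\ G 0%N = 0%VS, G n = fullv,
        forall j, (j < n)%N -> (G j <= G j.+1)%VS /\ \dim (G j.+1) = (\dim (G j)).+1
      & forall j, (j <= n)%N -> lie_ideal br (G j)].

(* Leibniz bimodule over the Lie algebra (V, br) regarded as a left Leibniz algebra *)
Definition is_leibniz_bimodule (F : fieldType) (V : vectType F) (M : vectType F)
  (br : V -> V -> V) (la : V -> M -> M) (ra : M -> V -> M) :=
  [/\ (forall x, linear (la x)) /\ (forall m, linear (la ^~ m)),
      (forall m, linear (ra m)) /\ (forall x, linear (ra ^~ x)),
      forall x y m, la (br x y) m = la x (la y m) - la y (la x m),
      forall x y m, ra (la x m) y = la x (ra m y) - ra m (br x y)
    & forall x y m, ra (ra m x) y = ra m (br x y) - la x (ra m y)].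

Definition sub_bimodule (F : fieldType) (V : vectType F) (M : vectType F)
  (la : V -> M -> M) (ra : M -> V -> M) (U : {vspace M}) :=
  forall x m, m \in U -> (la x m \in U) && (ra m x \in U).

Definition irreducible_bimodule (F : fieldType) (V : vectType F) (M : vectType F)
  (la : V -> M -> M) (ra : M -> V -> M) :=
  (\dim {: M} != 0)%N /\
  forall U : {vspace M}, sub_bimodule la ra U -> U = 0%VS \/ U = fullv.

Definition symmetric_bimodule (F : fieldType) (V : vectType F) (M : vectType F)
  (la : V -> M -> M) (ra : M -> V -> M) :=
  forall x m, ra m x = - la x m.

(* n-cochains: maps from n-tuples (finite functions 'I_n -> V) to M,
   multilinear = linear in each argument (i.e. elements of Hom(g^{(x)n}, M)). *)
Definition upd (V : Type) (n : nat) (x : {ffun 'I_n -> V}) (i : 'I_n) (v : V) :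
  {ffun 'I_n -> V} := [ffun j => if j == i then v else x j].

Definition multilinear (F : fieldType) (V : vectType F) (M : vectType F) (n : nat)
  (f : {ffun 'I_n -> V} -> M) :=
  forall (i : 'I_n) (x : {ffun 'I_n -> V}), linear (fun v => f (upd x i v)).

(* The Leibniz coboundary d^n : C^n -> C^(n+1), indices shifted to 0-based:
   (d f)(x_0..x_n) = sum_{i<n} (-1)^i x_i . f(.., ^x_i, ..)
                   + (-1)^(n+1) f(x_0..x_{n-1}) . x_n
                   + sum_{i<j<=n} (-1)^(i+1) f(.., ^x_i, .., [x_i,x_j] (at j), ..) *)
Definition leib_d (F : fieldType) (V : vectType F) (M : vectType F)
  (br : V -> V -> V) (la : V -> M -> M) (ra : M -> V -> M) (n : nat)
  (f : {ffun 'I_n -> V} -> M) (x : {ffun 'I_n.+1 -> V}) : M :=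
  \sum_(i < n.+1 | (i < n)%N)
      (-1) ^+ i *: la (x i) (f [ffun k => x (lift i k)])
  + (-1) ^+ n.+1 *: ra (f [ffun k => x (lift ord_max k)]) (x ord_max)
  + \sum_(i < n.+1) \sum_(j < n.+1 | (i < j)%N)
      (-1) ^+ i.+1 *:
        f [ffun k => if lift i k == j then br (x i) (x j) else x (lift i k)].

(* HL^n(g, M) = 0 for n >= 1: every multilinear n-cocycle is the coboundary of a
   multilinear (n-1)-cochain.  Stated for n = k+1. *)
Definition HL_vanishes_pos (F : fieldType) (V : vectType F) (M : vectType F)
  (br : V -> V -> V) (la : V -> M -> M) (ra : M -> V -> M) (k : nat) :=
  forall f : {ffun 'I_k.+1 -> V} -> M, multilinear f ->
    (forall x, leib_d br la ra f x = 0) ->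
    exists g : {ffun 'I_k -> V} -> M, multilinear g /\
      forall x, leib_d br la ra g x = f x.

(* HL^0(g, M) = ker d^0 = 0 (C^{-1} = 0). *)
Definition HL0_vanishes (F : fieldType) (V : vectType F) (M : vectType F)
  (br : V -> V -> V) (la : V -> M -> M) (ra : M -> V -> M) :=
  forall f : {ffun 'I_0 -> V} -> M, multilinear f ->
    (forall x, leib_d br la ra f x = 0) -> forall x, f x = 0.

(* Main.v *)
Require Import Defs.
From HB Require Import structures.
From mathcomp Require Import all_boot all_order all_algebra.
From Stdlib Require Import Classical FunctionalExtensionality.
From mathcomp Require Import zify.

Module P1.
Set Implicit Arguments. Unset Strict Implicit. Unset Printing Implicit Defensive.
Import GRing.Theory.
Local Open Scope ring_scope.

Section Lin.
Variables (R : fieldType) (U W : lmodType R).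
Implicit Types (f g : U -> W).
Lemma linB f : linear f -> forall x y, f (x - y) = f x - f y.
Proof. by move=> h; apply: zmod_morphism_linear. Qed.
Lemma lin0 f : linear f -> f 0 = 0.
Proof. by move=> h; rewrite -(subrr 0) linB // subrr. Qed.
Lemma linN f : linear f -> forall x, f (- x) = - f x.
Proof. by move=> h x; rewrite -sub0r linB // lin0 // sub0r. Qed.
Lemma linD f : linear f -> forall x y, f (x + y) = f x + f y.
Proof. by move=> h; case: (GRing.semilinear_linear h). Qed.
Lemma linZ f : linear f -> forall a x, f (a *: x) = a *: f x.
Proof. by move=> h; apply: scalable_linear. Qed.
Lemma lin_sum f : linear f -> forall (I : Type) (r : seq I) (P : pred I) (G : I -> U),
  f (\sum_(i <- r | P i) G i) = \sum_(i <- r | P i) f (G i).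
Proof.
move=> h I r P G; elim/big_rec2: _ => [|i y1 y2 _ <-]; first exact: lin0.
by rewrite linD.
Qed.
Lemma lin_comb f g (c : R) : linear f -> linear g -> linear (fun v => c *: f v + g v).
Proof.
move=> hf hg a u v /=; rewrite hf hg !scalerDr !scalerA [c * a]mulrC; by rewrite addrACA.
Qed.
Lemma lin_const0 : linear (fun _ : U => (0 : W)).
Proof. by move=> a u v; rewrite scaler0 addr0. Qed.
End Lin.

Lemma lin_comp (R : pzRingType) (U W X : lmodType R) (f : W -> X) (g : U -> W) :
  linear f -> linear g -> linear (fun v => f (g v)).
Proof. by move=> hf hg a u v /=; rewrite hg hf. Qed.

Lemma lin_sumf (R : pzRingType) (U W : lmodType R) (I : Type) (r : seq I) (P : pred I)
  (G : I -> U -> W) : (forall i, linear (G i)) -> linear (fun v => \sum_(i <- r | P i) G i v).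
Proof.
move=> h a u v /=; rewrite scaler_sumr -big_split /=; apply: eq_bigr => i _.
by rewrite h.
Qed.

Section Tup.
Variable V : Type.
Definition tcons n (a : V) (y : {ffun 'I_n -> V}) : {ffun 'I_n.+1 -> V} :=
  [ffun k => if unlift ord0 k is Some k' then y k' else a].
Lemma tcons0 n a (y : {ffun 'I_n -> V}) : tcons a y ord0 = a.
Proof. by rewrite ffunE unlift_none. Qed.
Lemma tconsS n a (y : {ffun 'I_n -> V}) k : tcons a y (lift ord0 k) = y k.
Proof. by rewrite ffunE liftK. Qed.
Lemma tcons_eta n (t : {ffun 'I_n.+1 -> V}) :
  t = tcons (t ord0) [ffun k => t (lift ord0 k)].
Proof.
apply/ffunP=> k; case: (unliftP ord0 k) => [j ->|->]; first by rewrite tconsS ffunE.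
by rewrite tcons0.
Qed.
Lemma updE n (y : {ffun 'I_n -> V}) j v l : upd y j v l = if l == j then v else y l.
Proof. by rewrite ffunE. Qed.
Lemma upd_same n (y : {ffun 'I_n -> V}) j u v : upd (upd y j u) j v = upd y j v.
Proof. by apply/ffunP=> l; rewrite !updE; case: eqP. Qed.
Lemma upd_comm n (y : {ffun 'I_n -> V}) j l u v : j != l ->
  upd (upd y j u) l v = upd (upd y l v) j u.
Proof.
move=> hjl; apply/ffunP=> k; rewrite !updE.
case: (eqVneq k l) => [->|]; first by rewrite eq_sym (negPf hjl).
by case: eqP.
Qed.
Lemma upd_id n (y : {ffun 'I_n -> V}) j : upd y j (y j) = y.
Proof. by apply/ffunP=> l; rewrite updE; case: eqP => [->|]. Qed.
Lemma upd_eq n (y : {ffun 'I_n -> V}) j v : upd y j v j = v.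
Proof. by rewrite updE eqxx. Qed.
Lemma upd_tcons0 n a (y : {ffun 'I_n -> V}) v : upd (tcons a y) ord0 v = tcons v y.
Proof.
apply/ffunP=> k; rewrite updE; case: (unliftP ord0 k) => [j ->|->].
  by rewrite eq_sym (negPf (neq_lift _ _)) !tconsS.
by rewrite eqxx tcons0.
Qed.
Lemma upd_tconsS n a (y : {ffun 'I_n -> V}) j v :
  upd (tcons a y) (lift ord0 j) v = tcons a (upd y j v).
Proof.
apply/ffunP=> k; rewrite updE; case: (unliftP ord0 k) => [i ->|->].
  by rewrite (inj_eq lift_inj) !tconsS updE.
by rewrite (negPf (neq_lift _ _)) !tcons0.
Qed.
Lemma tuple0_eq (u v : {ffun 'I_0 -> V}) : u = v.
Proof. by apply/ffunP=> [[]]. Qed.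
Lemma lift_lift0 n (i : 'I_n.+1) (j : 'I_n) :
  lift (lift ord0 i) (lift ord0 j) = lift ord0 (lift i j) :> 'I_n.+2.
Proof. by apply: val_inj; rewrite /= /bump /= !add1n ltnS addnS. Qed.
Lemma lift_lift00 n (i : 'I_n.+1) :
  lift (lift ord0 i) ord0 = ord0 :> 'I_n.+2.
Proof. by apply: val_inj. Qed.
Lemma lift_max00 n : lift ord_max ord0 = ord0 :> 'I_n.+2.
Proof. by apply: val_inj. Qed.
Lemma ord_max_lift n : (ord_max : 'I_n.+2) = lift ord0 ord_max.
Proof. by apply: val_inj. Qed.
Lemma lift_max0 n (j : 'I_n) :
  lift ord_max (lift ord0 j) = lift ord0 (lift ord_max j) :> 'I_n.+2.
Proof. by apply: val_inj; rewrite /= /bump /= !add1n ltnS leqNgt ltn_ord. Qed.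

Lemma tail_tcons n a (y : {ffun 'I_n -> V}) : [ffun k => tcons a y (lift ord0 k)] = y.
Proof. by apply/ffunP=> k; rewrite ffunE tconsS. Qed.
Lemma lift_tcons n a (y : {ffun 'I_n.+1 -> V}) i :
  [ffun k => tcons a y (lift (lift ord0 i) k)] = tcons a [ffun k => y (lift i k)].
Proof.
apply/ffunP=> k; rewrite ffunE; case: (unliftP ord0 k) => [j ->|->].
  by rewrite lift_lift0 !tconsS ffunE.
by rewrite lift_lift00 !tcons0.
Qed.
Lemma liftmax_tcons n a (y : {ffun 'I_n.+1 -> V}) :
  [ffun k => tcons a y (lift ord_max k)] = tcons a [ffun k => y (lift ord_max k)].
Proof.
apply/ffunP=> k; rewrite ffunE; case: (unliftP ord0 k) => [j ->|->].
  by rewrite lift_max0 !tconsS ffunE.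
by rewrite lift_max00 !tcons0.
Qed.
Lemma tcons_max n a (y : {ffun 'I_n.+1 -> V}) : tcons a y ord_max = y ord_max.
Proof. by rewrite ord_max_lift tconsS. Qed.
Lemma p3_tcons0 n (b : V -> V -> V) a (y : {ffun 'I_n -> V}) j :
  [ffun k => if lift ord0 k == lift ord0 j then b (tcons a y ord0) (tcons a y (lift ord0 j))
             else tcons a y (lift ord0 k)] = upd y j (b a (y j)).
Proof. by apply/ffunP=> k; rewrite ffunE (inj_eq lift_inj) tcons0 !tconsS updE. Qed.
Lemma p3_tconsS n (b : V -> V -> V) a (y : {ffun 'I_n.+1 -> V}) i j :
  [ffun k => if lift (lift ord0 i) k == lift ord0 j
             then b (tcons a y (lift ord0 i)) (tcons a y (lift ord0 j))
             else tcons a y (lift (lift ord0 i) k)] =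
  tcons a [ffun k => if lift i k == j then b (y i) (y j) else y (lift i k)].
Proof.
apply/ffunP=> k; rewrite ffunE; case: (unliftP ord0 k) => [l ->|->].
  by rewrite lift_lift0 (inj_eq lift_inj) !tconsS ffunE.
by rewrite lift_lift00 (negPf (neq_lift _ _)) !tcons0.
Qed.
End Tup.

End P1.
Import P1.

Module P2.
Set Implicit Arguments. Unset Strict Implicit. Unset Printing Implicit Defensive.
Import GRing.Theory.
Local Open Scope ring_scope.

Section Coch.
Variables (F : fieldType) (V M : vectType F) (br : V -> V -> V)
  (la : V -> M -> M) (ra : M -> V -> M).
Local Notation d := (leib_d br la ra).

Definition ic n a (f : {ffun 'I_n.+1 -> V} -> M) : {ffun 'I_n -> V} -> M :=
  fun t => f (tcons a t).
Definition th n a (f : {ffun 'I_n -> V} -> M) : {ffun 'I_n -> V} -> M :=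
  fun y => la a (f y) - \sum_(j < n) f (upd y j (br a (y j))).

Definition P1 n (f : {ffun 'I_n -> V} -> M) (x : {ffun 'I_n.+1 -> V}) :=
  \sum_(i < n.+1 | (i < n)%N) (-1) ^+ i *: la (x i) (f [ffun k => x (lift i k)]).
Definition P2 n (f : {ffun 'I_n -> V} -> M) (x : {ffun 'I_n.+1 -> V}) :=
  (-1) ^+ n.+1 *: ra (f [ffun k => x (lift ord_max k)]) (x ord_max).
Definition P3 n (f : {ffun 'I_n -> V} -> M) (x : {ffun 'I_n.+1 -> V}) :=
  \sum_(i < n.+1) \sum_(j < n.+1 | (i < j)%N)
      (-1) ^+ i.+1 *:
        f [ffun k => if lift i k == j then br (x i) (x j) else x (lift i k)].
Lemma dE n f x : @leib_d F V M br la ra n f x = P1 f x + P2 f x + P3 f x.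
Proof. by []. Qed.

Lemma signS (i : nat) (m : M) : (-1) ^+ i.+1 *: m = - ((-1) ^+ i *: m).
Proof. by rewrite exprS mulN1r scaleNr. Qed.

Lemma cartan1 n a (f : {ffun 'I_n.+1 -> V} -> M) y :
  P1 f (tcons a y) = la a (f y) - P1 (ic a f) y.
Proof.
rewrite /P1 big_mkcond big_ord_recl /= tcons0 tail_tcons expr0 scale1r.
congr (_ + _); rewrite [in RHS]big_mkcond -sumrN; apply: eq_bigr => i _.
rewrite /bump /= add1n ltnS; case: ifP => _; last by rewrite oppr0.
by rewrite tconsS lift_tcons signS.
Qed.

Lemma cartan2 n a (f : {ffun 'I_n.+1 -> V} -> M) y :
  P2 f (tcons a y) = - P2 (ic a f) y.
Proof. by rewrite /P2 liftmax_tcons tcons_max signS. Qed.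

Lemma cartan3 n a (f : {ffun 'I_n.+1 -> V} -> M) y :
  P3 f (tcons a y) = - \sum_(j < n.+1) f (upd y j (br a (y j))) - P3 (ic a f) y.
Proof.
rewrite /P3 big_ord_recl /=; congr (_ + _).
  rewrite big_mkcond big_ord_recl /= add0r -sumrN; apply: eq_bigr => j _.
  by rewrite p3_tcons0 expr1 scaleN1r.
rewrite -sumrN; apply: eq_bigr => i _.
rewrite big_mkcond big_ord_recl /= add0r [in RHS]big_mkcond -sumrN.
apply: eq_bigr => j _; rewrite /bump /= !add1n ltnS; case: ifP => _; last by rewrite oppr0.
by rewrite p3_tconsS signS.
Qed.

Lemma cartan n a (f : {ffun 'I_n.+1 -> V} -> M) y :
  d (ic a f) y + d f (tcons a y) = th a f y.
Proof.
rewrite !dE addrACA [P1 _ y + _ + _]addrACA cartan1 cartan2 cartan3.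
by rewrite subrr addr0 [P1 _ y + _]addrC subrK [P3 _ y + _]addrC subrK.
Qed.
End Coch.

End P2.
Import P2.

Module P3.
Set Implicit Arguments. Unset Strict Implicit. Unset Printing Implicit Defensive.
Import GRing.Theory.
Local Open Scope ring_scope.

Section Coch2.
Variables (F : fieldType) (V M : vectType F) (br : V -> V -> V)
  (la : V -> M -> M) (ra : M -> V -> M).
Hypothesis hla : forall x, linear (la x).
Hypothesis hlax : forall m, linear (la ^~ m).
Hypothesis hra : forall m, linear (ra m).
Hypothesis hrax : forall x, linear (ra ^~ x).
Hypothesis hbr : forall x, linear (br x).
Hypothesis hbrx : forall y, linear (br ^~ y).
Hypothesis hbr0 : forall x, br x x = 0.
Hypothesis hjac : forall x y z, br x (br y z) + br y (br z x) + br z (br x y) = 0.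
Hypothesis hLLM : forall x y m, la (br x y) m = la x (la y m) - la y (la x m).
Hypothesis hLML : forall x y m, ra (la x m) y = la x (ra m y) - ra m (br x y).
Hypothesis hMLL : forall x y m, ra (ra m x) y = ra m (br x y) - la x (ra m y).

Local Notation d := (leib_d br la ra).
Local Notation th := (th br la).

Lemma thE n a (g : {ffun 'I_n -> V} -> M) y :
  th a g y = la a (g y) - \sum_(j < n) g (upd y j (br a (y j))).
Proof. by []. Qed.

Lemma br_anti x y : br x y = - br y x.
Proof.
have := hbr0 (x + y); rewrite (linD (hbrx _)) !(linD (hbr _)) !hbr0 add0r addr0.
by move/eqP; rewrite addr_eq0 => /eqP.
Qed.

Lemma br_jac x z w : br z (br x w) - br x (br z w) = - br (br x z) w.
Proof.
have := hjac x z w; rewrite [br w x]br_anti (linN (hbr _)) [br w (br x z)]br_anti.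
move/eqP; rewrite addrAC subr_eq0 => /eqP <-.
by rewrite addrAC subrr sub0r.
Qed.

Lemma d_lin n c (f g : {ffun 'I_n -> V} -> M) x :
  d (fun t => c *: f t + g t) x = c *: d f x + d g x.
Proof.
have e1 : P1 la (fun t => c *: f t + g t) x = c *: P1 la f x + P1 la g x.
  rewrite /P1 scaler_sumr -big_split; apply: eq_bigr => i _ /=.
  by rewrite (linD (hla _)) (linZ (hla _)) scalerDr !scalerA mulrC.
have e2 : P2 ra (fun t => c *: f t + g t) x = c *: P2 ra f x + P2 ra g x.
  by rewrite /P2 (linD (hrax _)) (linZ (hrax _)) scalerDr !scalerA mulrC.
have e3 : P3 br (fun t => c *: f t + g t) x = c *: P3 br f x + P3 br g x.
  rewrite /P3 scaler_sumr -big_split; apply: eq_bigr => i _ /=.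
  rewrite scaler_sumr -big_split; apply: eq_bigr => j _ /=.
  by rewrite scalerDr !scalerA mulrC.
by rewrite !dE e1 e2 e3 !scalerDr [X in X + _ = _]addrACA [LHS]addrACA.
Qed.

Lemma th_lin n a c (f g : {ffun 'I_n -> V} -> M) y :
  th a (fun t => c *: f t + g t) y = c *: th a f y + th a g y.
Proof.
rewrite /th (linD (hla _)) (linZ (hla _)) big_split /= -scaler_sumr.
by rewrite opprD addrACA scalerBr.
Qed.

Lemma d_sub n (f g : {ffun 'I_n -> V} -> M) x :
  d (fun t => f t - g t) x = d f x - d g x.
Proof.
have -> : (fun t => f t - g t) = (fun t => (-1) *: g t + f t).
  by apply: functional_extensionality => t; rewrite scaleN1r addrC.
by rewrite d_lin scaleN1r addrC.
Qed.

Lemma th_sub n a (f g : {ffun 'I_n -> V} -> M) y :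
  th a (fun t => f t - g t) y = th a f y - th a g y.
Proof.
have -> : (fun t => f t - g t) = (fun t => (-1) *: g t + f t).
  by apply: functional_extensionality => t; rewrite scaleN1r addrC.
by rewrite th_lin scaleN1r addrC.
Qed.

Lemma d0 (f : {ffun 'I_0 -> V} -> M) x t0 : d f x = - ra (f t0) (x ord0).
Proof.
rewrite dE.
have -> : P1 la f x = 0 by apply: big_pred0 => i; rewrite ltn0.
have -> : P3 br f x = 0.
  by rewrite /P3 big_ord1; apply: big_pred0 => j; rewrite (ord1 j).
rewrite add0r addr0 /P2 expr1 scaleN1r (tuple0_eq [ffun k => x (lift ord_max k)] t0); congr (- ra _ (x _)).
by apply: val_inj.
Qed.

Lemma th0 a (f : {ffun 'I_0 -> V} -> M) y : th a f y = la a (f y).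
Proof. by rewrite /th big_ord0 subr0. Qed.

Lemma ic_th n x z (f : {ffun 'I_n.+1 -> V} -> M) y :
  ic z (th x f) y = th x (ic z f) y - ic (br x z) f y.
Proof.
rewrite /P2.ic /P2.th big_ord_recl /= upd_tcons0 tcons0.
under eq_bigr => j _ do rewrite upd_tconsS tconsS.
by rewrite opprD addrA addrAC.
Qed.

Lemma zm1 (Z : zmodType) (a b c e k o : Z) :
  (a - k + (b + o)) - (c - k + (e + o)) = (a - c) + (b - e).
Proof.
by rewrite addrACA [c - k + _]addrACA [c + e + _]addrC addrKA opprD addrACA.
Qed.

Section TC.
Variables (n : nat) (f : {ffun 'I_n -> V} -> M) (y : {ffun 'I_n -> V}).
Hypothesis hf : multilinear f.
Let Cr x z := \sum_(j < n) la z (f (upd y j (br x (y j)))).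
Let Dg x z := \sum_(j < n) f (upd y j (br z (br x (y j)))).
Let Off x z := \sum_(j < n) \sum_(l < n | l != j)
   f (upd (upd y j (br x (y j))) l (br z (y l))).

Lemma thth_exp x z :
  th x (th z f) y = la x (la z (f y)) - (Cr z x + Cr x z) + (Dg x z + Off x z).
Proof.
rewrite thE.
have -> : \sum_(j < n) th z f (upd y j (br x (y j))) = Cr x z - (Dg x z + Off x z).
  under eq_bigr do rewrite thE.
  rewrite sumrB /Dg /Off -big_split /=; congr (_ - _); apply: eq_bigr => j _.
  rewrite (bigD1 j) //= upd_eq upd_same; congr (_ + _).
  by apply: eq_bigr => l hl; rewrite updE (negPf hl).
rewrite [th z f y]thE (linB (hla _)) (lin_sum (hla _)) -/(Cr z x).
by rewrite opprB addrA addrAC opprD !addrA.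
Qed.

Lemma Off_sym x z : Off x z = Off z x.
Proof.
rewrite /Off; under eq_bigr => j _ do rewrite big_mkcond /=.
rewrite exchange_big /=; apply: eq_bigr => j _; rewrite [RHS]big_mkcond /=.
apply: eq_bigr => l _; rewrite eq_sym; case: ifP => // hjl.
by rewrite upd_comm // hjl.
Qed.

Lemma th_comm x z :
  th x (th z f) y - th z (th x f) y = th (br x z) f y.
Proof.
rewrite !thth_exp (Off_sym z x) [Cr x z + _]addrC zm1 -hLLM /P2.th.
congr (_ + _); rewrite /Dg -sumrB -sumrN; apply: eq_bigr => j _.
by rewrite -(linB (hf _ _)) br_jac (linN (hf _ _)).
Qed.
End TC.

Local Notation ml := (@multilinear F V M _).

Lemma zm2 (Z : zmodType) (a b c e : Z) :
  a - (b - c) = e - b - ((e - a) - c).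
Proof.
rewrite [e - b]addrC -[e - a - c]addrA addrKA opprD !opprK opprB.
by rewrite opprK addrCA [a + c]addrC.
Qed.

Lemma cartan' n a (f : {ffun 'I_n.+1 -> V} -> M) y :
  d f (tcons a y) = th a f y - d (ic a f) y.
Proof. by rewrite -(cartan br la ra) [d (ic a f) y + _]addrC addrK. Qed.

Lemma ml_ic n a (f : {ffun 'I_n.+1 -> V} -> M) : ml f -> ml (ic a f).
Proof.
move=> hf i x; have -> : (fun v => ic a f (upd x i v)) = (fun v => f (upd (tcons a x) (lift ord0 i) v)).
  by apply: functional_extensionality => v; rewrite upd_tconsS.
exact: hf.
Qed.

Lemma TD k : forall f : {ffun 'I_k -> V} -> M, ml f ->
  (forall x t, d (th x f) t = th x (d f) t) /\ (forall t, d (d f) t = 0).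
Proof.
elim: k => [|m IH] f hf.
  pose e : {ffun 'I_0 -> V} := [ffun k => 0].
  have T0 : forall x t, d (th x f) t = th x (d f) t.
    move=> x t; rewrite (d0 _ _ e) th0 thE big_ord1 !(d0 f _ e) upd_eq.
    by rewrite hLML (linN (hla _)) opprB opprK addrC.
  split=> // t; rewrite (tcons_eta t) cartan' thE big_ord1.
  set y := [ffun k => _]; set z := t ord0.
  rewrite (d0 (ic z (d f)) y e) /ic (d0 f (tcons z e) e) tcons0 !(d0 f _ e) upd_eq.
  rewrite (linN (hla _)) (linN (hrax _)) opprK hMLL.
  by rewrite opprK [- _ + _]addrC subrr.
have T1 : forall x t, d (th x f) t = th x (d f) t.
  move=> x t; rewrite (tcons_eta t); set z := t ord0; set y := [ffun k => _].
  rewrite cartan'.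
  have -> : ic z (th x f) = (fun y => th x (ic z f) y - ic (br x z) f y).
    by apply: functional_extensionality => u; rewrite ic_th.
  rewrite d_sub; rewrite ((IH _ (@ml_ic _ z f hf)).1 x y).
  rewrite -/(ic z (th x (d f)) y) ic_th.
  have -> : ic z (d f) = (fun y => th z f y - d (ic z f) y).
    by apply: functional_extensionality => u; rewrite /ic cartan'.
  rewrite th_sub /ic cartan' -/(ic (br x z) f).
  rewrite -(@th_comm _ f y hf x z).
  exact: zm2.
split=> // t; rewrite (tcons_eta t); set z := t ord0; set y := [ffun k => _].
rewrite cartan'.
have -> : ic z (d f) = (fun y => th z f y - d (ic z f) y).
  by apply: functional_extensionality => u; rewrite /ic cartan'.
by rewrite d_sub T1 ((IH _ (@ml_ic _ z f hf)).2 y) subr0 subrr.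
Qed.

Lemma ml_comb n c (f g : {ffun 'I_n -> V} -> M) :
  ml f -> ml g -> ml (fun t => c *: f t + g t).
Proof. by move=> hf hg i x; apply: lin_comb; [apply: hf | apply: hg]. Qed.

Lemma ml_th n a (f : {ffun 'I_n -> V} -> M) : ml f -> ml (th a f).
Proof.
move=> hf i x.
have -> : (fun v => th a f (upd x i v)) = (fun v =>
   (-1) *: (\sum_(j < n) f (upd (upd x i v) j (br a (upd x i v j)))) + la a (f (upd x i v))).
  by apply: functional_extensionality => v; rewrite thE scaleN1r addrC.
apply: lin_comb; last exact: lin_comp (hla a) (hf i x).
apply: lin_sumf => j; case: (eqVneq j i) => [->|hji].
  have -> : (fun v => f (upd (upd x i v) i (br a (upd x i v i)))) = (fun v => f (upd x i (br a v))).
    by apply: functional_extensionality => v; rewrite upd_same upd_eq.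
  exact: lin_comp (hf i x) (hbr a).
have -> : (fun v => f (upd (upd x i v) j (br a (upd x i v j)))) =
          (fun v => f (upd (upd x j (br a (x j))) i v)).
  apply: functional_extensionality => v; rewrite updE (negPf hji) upd_comm //.
  by rewrite eq_sym.
exact: hf.
Qed.

Lemma ml_zero n : ml (fun _ : {ffun 'I_n -> V} => (0 : M)).
Proof. by move=> i x; apply: lin_const0. Qed.

Lemma d_zero n x : d (fun _ : {ffun 'I_n -> V} => (0 : M)) x = 0.
Proof.
have -> : (fun _ : {ffun 'I_n -> V} => (0 : M)) = (fun t => (fun _ => 0) t - (fun _ => 0) t).
  by apply: functional_extensionality => t; rewrite subrr.
by rewrite d_sub subrr.
Qed.

Definition Zs n (f : {ffun 'I_n -> V} -> M) := ml f /\ forall x, d f x = 0.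
Definition Bs n (f : {ffun 'I_n.+1 -> V} -> M) :=
  exists g : {ffun 'I_n -> V} -> M, ml g /\ forall x, d g x = f x.

Lemma Zs_comb n c (f g : {ffun 'I_n -> V} -> M) :
  Zs f -> Zs g -> Zs (fun t => c *: f t + g t).
Proof.
move=> [hf df] [hg dg]; split; first exact: ml_comb.
by move=> x; rewrite d_lin df dg scaler0 addr0.
Qed.

Lemma Bs_comb n c (f g : {ffun 'I_n.+1 -> V} -> M) :
  Bs f -> Bs g -> Bs (fun t => c *: f t + g t).
Proof.
move=> [f' [hf df]] [g' [hg dg]]; exists (fun t => c *: f' t + g' t).
by split; [exact: ml_comb | move=> x; rewrite d_lin df dg].
Qed.

Lemma Bs_ext n (f g : {ffun 'I_n.+1 -> V} -> M) :
  (forall t, f t = g t) -> Bs f -> Bs g.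
Proof. by move=> e [h [hh dh]]; exists h; split=> // x; rewrite dh e. Qed.

Lemma Zs_zero n : Zs (fun _ : {ffun 'I_n -> V} => (0 : M)).
Proof. split; [exact: ml_zero | exact: d_zero]. Qed.

Lemma th_cocycle n a (f : {ffun 'I_n.+1 -> V} -> M) :
  Zs f -> forall y, th a f y = d (ic a f) y.
Proof. by move=> [hf df] y; rewrite -(cartan br la ra) df addr0. Qed.

Lemma Zs_th n a (f : {ffun 'I_n.+1 -> V} -> M) : Zs f -> Zs (th a f).
Proof.
move=> hZ; split; first exact: ml_th hZ.1.
move=> x; have -> : th a f = d (ic a f).
  by apply: functional_extensionality => y; rewrite th_cocycle.
by rewrite ((TD (@ml_ic _ a f hZ.1)).2 x).
Qed.

Lemma Bs_th n a (f : {ffun 'I_n.+1 -> V} -> M) : Zs f -> Bs (th a f).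
Proof.
move=> hZ; exists (ic a f); split; first exact: ml_ic hZ.1.
by move=> y; rewrite th_cocycle.
Qed.

Lemma dim_addline (W : vectType F) (U : {vspace W}) p :
  p \notin U -> (\dim U < \dim (U + <[p]>))%N.
Proof.
move=> hp; rewrite (ltn_leqif (dimv_leqif_sup (addvSl U <[p]>))).
apply/negP=> /subvP h; apply/negP: hp; apply/negPn; apply: h.
by apply: (subvP (addvSr U _)); exact: memv_line.
Qed.

Lemma pred_vspace (W : vectType F) (P : W -> Prop) :
  P 0 -> (forall c u v, P u -> P v -> P (c *: u + v)) ->
  exists U : {vspace W}, forall m, P m <-> m \in U.
Proof.
move=> P0 Pc.
have claim : forall q, (exists U : {vspace W}, (forall u, u \in U -> P u) /\
      (forall m, P m -> m \in U)) \/
   (exists U : {vspace W}, (forall u, u \in U -> P u) /\ (q <= \dim U)%N).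
  elim=> [|q [L|[U [hU hq]]]].
  + by right; exists 0%VS; split=> // u; rewrite memv0 => /eqP ->.
  + by left.
  + case: (classic (forall m, P m -> m \in U)) => [h|hn].
      by left; exists U.
    have [p hp'] := not_all_ex_not _ _ hn.
    have [hp hpU] := imply_to_and _ _ hp'.
    right; exists (U + <[p]>)%VS; split.
      move=> u /memv_addP [u1 hu1 [u2 /vlineP [c ->] ->]].
      by rewrite addrC; apply: Pc => //; exact: hU.
    by apply: leq_ltn_trans hq (dim_addline _); apply/negP.
case: (claim (\dim {: W}).+1) => [[U [h1 h2]]|[U [_ hq]]].
  by exists U => m; split; [exact: h2 | exact: h1].
by have := dimvS (subvf U); rewrite leqNgt hq.
Qed.

Hypothesis hirr : irreducible_bimodule la ra.
Hypothesis hdim : (\dim {: M} != 1)%N.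

Lemma sym_or_anti : (forall x m, ra m x = - la x m) \/ (forall x m, ra m x = 0).
Proof.
have [U hU] : exists U : {vspace M}, forall m, (forall y, ra m y = 0) <-> m \in U.
  apply: pred_vspace => [y|c u v hu hv y]; first exact: lin0 (hrax y).
  by rewrite (linD (hrax _)) (linZ (hrax _)) hu hv scaler0 addr0.
have sub : sub_bimodule la ra U.
  move=> x m /hU hm; apply/andP; split; apply/hU => y.
    by rewrite hLML !hm (lin0 (hla _)) subrr.
  by rewrite hMLL !hm (lin0 (hla _)) subrr.
case: (hirr.2 U sub) => [U0|Uf]; last first.
  by right=> x m; apply: (proj2 (hU m)); rewrite Uf memvf.
left=> x m; apply/eqP; rewrite -subr_eq0 opprK; apply/eqP.
have : ra m x + la x m \in U.
  apply/hU => y; rewrite (linD (hrax _)) hMLL hLML.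
  by rewrite -opprB addNr.
by rewrite U0 memv0 => /eqP.
Qed.

Lemma irr_la (P : M -> Prop) : P 0 -> (forall c u v, P u -> P v -> P (c *: u + v)) ->
  (forall x m, P m -> P (la x m)) -> (forall m, P m -> m = 0) \/ (forall m, P m).
Proof.
move=> P0 Pc Pl; have [U hU] := pred_vspace P0 Pc.
have sub : sub_bimodule la ra U.
  move=> x m /hU hm; apply/andP; split; apply/hU; first exact: Pl.
  case: sym_or_anti => -> //.
  by rewrite -scaleN1r -[_ *: _]addr0; apply: Pc => //; exact: Pl.
case: (hirr.2 U sub) => [U0|Uf].
  by left=> m /hU; rewrite U0 memv0 => /eqP.
by right=> m; apply/hU; rewrite Uf memvf.
Qed.

Lemma not_scalar (L : V -> F) : ~ (forall x m, la x m = L x *: m).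
Proof.
move=> hL.
have [m0 hm0] : exists m0 : M, m0 != 0.
  apply: NNPP => /not_ex_all_not h; apply/negP: hirr.1; apply/negPn.
  rewrite dimv_eq0; apply/eqP/vspaceP => m; rewrite memv0 memvf.
  by case: eqP => // /eqP hm; case: (h m).
have sub : sub_bimodule la ra <[m0]>.
  move=> x m /vlineP [c ->]; apply/andP; split.
    by rewrite hL scalerA; apply/vlineP; exists (L x * c).
  case: sym_or_anti => ->; last exact: mem0v.
  by rewrite hL scalerA -scaleNr; apply/vlineP; exists (- (L x * c)).
case: (hirr.2 _ sub) => [U0|Uf].
  by move: (memv_line m0); rewrite U0 memv0 (negPf hm0).
by move: hdim; rewrite -Uf dim_vline hm0.
Qed.

Variables (N : nat) (G : nat -> {vspace V}).
Hypothesis hG0 : G 0 = 0%VS.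
Hypothesis hGN : G N = fullv.
Hypothesis hGs : forall j, (j < N)%N -> (G j <= G j.+1)%VS /\ \dim (G j.+1) = (\dim (G j)).+1.
Hypothesis hGi : forall j, (j <= N)%N -> lie_ideal br (G j).

Lemma ex_e j : exists v, (j < N)%N ==> (v \in G j.+1) && (v \notin G j).
Proof.
case: (ltnP j N) => hj; last by exists 0.
have [hs hd] := hGs hj; apply: NNPP => /not_ex_all_not h.
have : (G j.+1 <= G j)%VS.
  apply/subvP => v hv; have := h v; rewrite hv /=.
  by move/negP; rewrite negbK.
by move/dimvS; rewrite hd ltnn.
Qed.

Definition e j := xchoose (ex_e j).
Lemma e_in j : (j < N)%N -> e j \in G j.+1.
Proof. by move=> hj; have /implyP/(_ hj)/andP[] := xchooseP (ex_e j). Qed.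
Lemma e_notin j : (j < N)%N -> e j \notin G j.
Proof. by move=> hj; have /implyP/(_ hj)/andP[] := xchooseP (ex_e j). Qed.

Lemma G_step j : (j < N)%N -> G j.+1 = (G j + <[e j]>)%VS.
Proof.
move=> hj; have [hs hd] := hGs hj; apply/eqP; rewrite eq_sym eqEdim subv_add hs.
by rewrite -memvE e_in //= hd; apply: dim_addline; apply: e_notin.
Qed.

Lemma span_vanish (W : vectType F) (phi : V -> W) : linear phi ->
  forall j, (j <= N)%N -> (forall i, (i < j)%N -> phi (e i) = 0) ->
  forall v, v \in G j -> phi v = 0.
Proof.
move=> hphi; elim=> [|j IH] hj h0 v.
  by rewrite hG0 memv0 => /eqP ->; exact: lin0.
rewrite G_step // => /memv_addP [u hu [w /vlineP [c ->] ->]].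
rewrite (linD hphi) (linZ hphi) h0 // scaler0 addr0.
by apply: IH => //; [exact: ltnW | move=> i hi; apply: h0; exact: ltnW].
Qed.

Lemma ex_lam i x : exists c : F, (i < N)%N ==> (br x (e i) - c *: e i \in G i).
Proof.
case: (ltnP i N) => hi; last by exists 0.
have : br x (e i) \in G i.+1 by apply: hGi => //; exact: e_in.
rewrite G_step // => /memv_addP [u hu [w /vlineP [c ->] ->]].
by exists c; rewrite addrK.
Qed.

Definition lam i x := xchoose (ex_lam i x).
Lemma lam_spec i x : (i < N)%N -> br x (e i) - lam i x *: e i \in G i.
Proof. by move=> hi; have /implyP/(_ hi) := xchooseP (ex_lam i x). Qed.

Section Rank.
Variable m : nat.
Local Notation T := {ffun 'I_m -> 'I_N}.
Definition eI (I : T) : {ffun 'I_m -> V} := [ffun l => e (I l)].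
Definition wt (I : T) := (\sum_(l < m) (I l : nat))%N.
Definition CC := #|{: T}|.
Definition rk (I : T) := (wt I * CC + enum_rank I)%N.
Definition Rb := ((m * N).+1 * CC)%N.

Lemma rk_inj I J : rk I = rk J -> I = J.
Proof.
move=> h; have : (rk I %% CC = rk J %% CC)%N by rewrite h.
have hI := ltn_ord (enum_rank I); have hJ := ltn_ord (enum_rank J).
rewrite /rk !modnMDl !modn_small //.
by move=> h2; apply: enum_rank_inj; apply: val_inj.
Qed.

Lemma rk_lower (I : T) l (j : 'I_N) : (j < I l)%N -> (rk (upd I l j) < rk I)%N.
Proof.
move=> hj.
have hw : (wt (upd I l j) < wt I)%N.
  rewrite /wt (bigD1 l) //= [X in (_ < X)%N](bigD1 l) //= upd_eq.
  rewrite (eq_bigr (fun i => (I i : nat))) => [|i hi]; first by rewrite ltn_add2r.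
  by rewrite updE (negPf hi).
have h1 := ltn_ord (enum_rank (upd I l j)).
rewrite /rk -/CC in h1 *; nia.
Qed.

Lemma rk_bound (I : T) : (rk I < Rb)%N.
Proof.
have hw : (wt I <= m * N)%N.
  rewrite /wt; apply: (@leq_trans (\sum_(l < m) N)).
    by apply: leq_sum => l _; exact: ltnW.
  by rewrite sum_nat_const card_ord.
have h1 := ltn_ord (enum_rank I).
rewrite /rk /Rb -/CC in h1 *; nia.
Qed.

Definition Yv r (f : {ffun 'I_m -> V} -> M) := forall J, (rk J < r)%N -> f (eI J) = 0.

Lemma upd_eI (J : T) l (i : 'I_N) : upd (eI J) l (e i) = eI (upd J l i).
Proof. by apply/ffunP=> l'; rewrite !ffunE; case: eqP. Qed.

Lemma KC (g : {ffun 'I_m -> V} -> M) (J : T) x : ml g ->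
  (forall J', (rk J' < rk J)%N -> g (eI J') = 0) ->
  th x g (eI J) = la x (g (eI J)) - (\sum_(l < m) lam (J l) x) *: g (eI J).
Proof.
move=> hg hJ; rewrite thE scaler_suml; congr (_ - _); apply: eq_bigr => l _.
set t := eI J; have tl : t l = e (J l) by rewrite ffunE.
rewrite tl; set w := br x (e (J l)) - lam (J l) x *: e (J l).
have -> : br x (e (J l)) = lam (J l) x *: e (J l) + w by rewrite addrC subrK.
rewrite (linD (hg l t)) (linZ (hg l t)) -tl upd_id.
rewrite (@span_vanish _ (fun v => g (upd t l v)) (hg l t) (J l)) ?addr0 //.
- exact: ltnW.
- move=> i hi; have hiN : (i < N)%N by apply: ltn_trans hi _.
  rewrite (_ : e i = e (Ordinal hiN)) // upd_eI; apply: hJ; exact: rk_lower.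
- exact: lam_spec.
Qed.

Lemma Y_th r (g : {ffun 'I_m -> V} -> M) x : ml g -> Yv r g -> Yv r (th x g).
Proof.
move=> hg hY J hJ; rewrite KC //; last by move=> J' hJ'; apply: hY; exact: ltn_trans hJ' hJ.
by rewrite hY // (lin0 (hla _)) scaler0 subr0.
Qed.

Lemma Y_comb r c (f g : {ffun 'I_m -> V} -> M) : Yv r f -> Yv r g -> Yv r (fun t => c *: f t + g t).
Proof. by move=> hf hg J hJ; rewrite hf // hg // scaler0 addr0. Qed.

Lemma vanish_all (J0 : T) (f : {ffun 'I_m -> V} -> M) : ml f ->
  (forall J, f (eI J) = 0) -> forall t, f t = 0.
Proof.
move=> hf h0.
have claim : forall q (J : T) (t : {ffun 'I_m -> V}),
    (forall l : 'I_m, (q <= l)%N -> t l = e (J l)) -> f t = 0.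
  elim=> [|q IH] J t ht.
    suff -> : t = eI J by [].
    by apply/ffunP=> l; rewrite ffunE ht.
  case: (ltnP q m) => hq; last first.
    apply: (IH J) => l hl; have := ltn_ord l; rewrite ltnNge (leq_trans hq hl) //.
  pose l0 := Ordinal hq.
  rewrite -(upd_id t l0).
  apply: (@span_vanish _ (fun v => f (upd t l0 v)) (hf l0 t) N) => //; last by rewrite hGN memvf.
  move=> i hi; apply: (IH (upd J l0 (Ordinal hi))) => l hl.
  rewrite !updE; case: eqP => // /eqP hll0; apply: ht.
  by rewrite ltn_neqAle hl andbT; apply: contra hll0 => /eqP h; apply/eqP/val_inj.
move=> t; apply: (claim m J0) => l; have := ltn_ord l; rewrite ltnNge => /negPf ->.
by [].
Qed.
End Rank.

Lemma mainZB k (J0 : {ffun 'I_k.+1 -> 'I_N}) s : forall r (f : {ffun 'I_k.+1 -> V} -> M),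
  (Rb k.+1 - r <= s)%N -> Zs f -> Yv r f -> Bs f.
Proof.
elim: s => [|s IH] r f hs hZ hY.
  move: hs; rewrite leqn0 subn_eq0 => hs.
  have hz : forall t, f t = 0.
    apply: (vanish_all J0 hZ.1) => J; apply: hY; exact: leq_trans (rk_bound J) hs.
  by exists (fun _ => 0); split; [exact: ml_zero | move=> x; rewrite d_zero hz].
case: (leqP (Rb k.+1 - r) s) => hrs; first exact: IH hrs hZ hY.
have hs' : (Rb k.+1 - r.+1 <= s)%N by lia.
case: (boolP [exists J : {ffun 'I_k.+1 -> 'I_N}, rk J == r]) => [/existsP [J /eqP hJ]| hn]; last first.
  apply: IH hs' hZ _ => J' hJ'; apply: hY; rewrite ltn_neqAle -ltnS hJ' andbT.
  by apply: contra hn => /eqP <-; apply/existsP; exists J'.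
pose L x := \sum_(l < k.+1) lam (J l) x.
have KCJ : forall g x, ml g -> Yv r g -> th x g (eI J) = la x (g (eI J)) - L x *: g (eI J).
  by move=> g x hg hy; apply: KC => // J' hJ'; apply: hy; rewrite -hJ.
have hY1 : forall g, Yv r g -> g (eI J) = 0 -> Yv r.+1 g.
  move=> g hy hgJ J'; rewrite ltnS leq_eqVlt => /orP [/eqP e'|]; last exact: hy.
  by rewrite (rk_inj (etrans e' (esym hJ))).
pose P := fun m => exists g, Zs g /\ Yv r g /\ g (eI J) = m.
have P0 : P 0 by exists (fun _ => 0); split; [exact: Zs_zero | split].
have Pc : forall c u v, P u -> P v -> P (c *: u + v).
  move=> c u v [g1 [z1 [y1 <-]]] [g2 [z2 [y2 <-]]]; exists (fun t => c *: g1 t + g2 t).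
  by split; [exact: Zs_comb | split; [exact: Y_comb | by []]].
have Pl : forall x m, P m -> P (la x m).
  move=> x _ [g [hz [hy <-]]]; exists (fun t => L x *: g t + th x g t); split.
    by apply: Zs_comb => //; exact: Zs_th.
  split; first by apply: Y_comb => //; exact: Y_th hz.1 hy.
  by rewrite KCJ //; [rewrite addrC subrK | exact: hz.1].
case: (irr_la P0 Pc Pl) => [Pz|Pall].
  apply: (IH _ _ hs' hZ); apply: hY1 => //; apply: Pz; exists f; split; [exact: hZ | split; [exact: hY | by []]].
pose Q := fun m => exists g, Zs g /\ Yv r g /\ Bs g /\ g (eI J) = m.
have Q0 : Q 0.
  exists (fun _ => 0); split; first exact: Zs_zero.
  split=> //; split=> //; exists (fun _ => 0); split; [exact: ml_zero | exact: d_zero].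
have Qc : forall c u v, Q u -> Q v -> Q (c *: u + v).
  move=> c u v [g1 [z1 [y1 [b1 <-]]]] [g2 [z2 [y2 [b2 <-]]]]; exists (fun t => c *: g1 t + g2 t).
  by split; [exact: Zs_comb | split; [exact: Y_comb | split; [exact: Bs_comb | by []]]].
have Ql : forall x m, Q m -> Q (la x m).
  move=> x _ [g [hz [hy [hb <-]]]]; exists (fun t => L x *: g t + th x g t); split.
    by apply: Zs_comb => //; exact: Zs_th.
  split; first by apply: Y_comb => //; exact: Y_th hz.1 hy.
  split; first by apply: Bs_comb => //; exact: Bs_th.
  by rewrite KCJ //; [rewrite addrC subrK | exact: hz.1].
case: (irr_la Q0 Qc Ql) => [Qz|Qall].
  exfalso; apply: (@not_scalar L) => x m; have [g [hz [hy <-]]] := Pall m.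
  have : Q (th x g (eI J)).
    exists (th x g); split; first exact: Zs_th.
    by split; [exact: Y_th hz.1 hy | split; [exact: Bs_th | by []]].
  by move/Qz; rewrite KCJ //; [move/eqP; rewrite subr_eq0 => /eqP | exact: hz.1].
have [g [hz [hy [hb hgJ]]]] := Qall (f (eI J)).
have hB : Bs (fun t => (-1) *: g t + f t).
  apply: IH hs' (Zs_comb _ hz hZ) _; apply: hY1; first exact: Y_comb.
  by rewrite hgJ scaleN1r addNr.
apply: Bs_ext (Bs_comb 1 hB hb) => t.
by rewrite scale1r scaleN1r [- _ + _]addrC subrK.
Qed.

Lemma main_pos k (f : {ffun 'I_k.+1 -> V} -> M) :
  ml f -> (forall x, d f x = 0) ->
  exists g : {ffun 'I_k -> V} -> M, ml g /\ forall x, d g x = f x.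
Proof.
move=> hf df.
have hN : (0 < N)%N.
  rewrite lt0n; apply/negP => /eqP hN0; apply: (@not_scalar (fun _ => 0)) => x m.
  have : x \in G N by rewrite hGN memvf.
  by rewrite hN0 hG0 memv0 => /eqP ->; rewrite (lin0 (hlax _)) scale0r.
pose J0 : {ffun 'I_k.+1 -> 'I_N} := [ffun _ => Ordinal hN].
by apply: (@mainZB k J0 (Rb k.+1) 0 f (leq_subr _ _) (conj hf df)).
Qed.

Lemma main_zero (hsym : symmetric_bimodule la ra) (f : {ffun 'I_0 -> V} -> M) :
  ml f -> (forall x, d f x = 0) -> forall x, f x = 0.
Proof.
move=> hf df x.
have hr : forall y, ra (f x) y = 0.
  move=> y; have := df [ffun _ => y]; rewrite (d0 _ _ x) ffunE.
  by move/eqP; rewrite oppr_eq0 => /eqP.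
have sub : sub_bimodule la ra <[f x]>.
  move=> y m /vlineP [c ->]; rewrite (linZ (hla _)) (linZ (hrax _)).
  have hl : la y (f x) = 0 by rewrite -[la y (f x)]opprK -hsym hr oppr0.
  by rewrite hl hr !scaler0 mem0v.
case: (hirr.2 _ sub) => [U0|Uf].
  by move: (memv_line (f x)); rewrite U0 memv0 => /eqP.
by move: hdim; rewrite -Uf dim_vline; case: (f x =P 0).
Qed.

End Coch2.


End P3.
Import P3.

Unset Implicit Arguments.
Import GRing.Theory.
Local Open Scope ring_scope.

Theorem proposition2p7 (F : fieldType) (V : vectType F) (M : vectType F)
  (br : V -> V -> V) (la : V -> M -> M) (ra : M -> V -> M) :
  is_lie_bracket br -> supersolvable br ->
  is_leibniz_bimodule br la ra -> irreducible_bimodule la ra ->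
  (\dim {: M} != 1)%N ->
  (forall k : nat, HL_vanishes_pos br la ra k) /\
  (symmetric_bimodule la ra -> HL0_vanishes br la ra).
Proof.
move=> [hbr hbrx hbr0 hjac] [N [G [hG0 hGN hGs hGi]]]
  [[hla hlax] [hra hrax] hLLM hLML hMLL] hirr hdim.
split.
  move=> k f hf df.
  apply: main_pos; eassumption.
move=> hsym f hf df.
apply: main_zero; eassumption.
Qed.
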